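(* Let $p$ be a prime and let $A$ be a sequence of length $4p-4$ over $(\mathbb{Z}/p\mathbb{Z})^2$ which contains no zero-sum subsequence of length $p$ and in which every element has multiplicity $<\frac{p}{2}$. Then no (affine) line in $(\mathbb{Z}/p\mathbb{Z})^2$ contains $\frac{3p}{2}$ elements of $A$, i.e. for every line $\ell$ the number of terms of $A$ (counted with multiplicity) lying on $\ell$ is less than $\frac{3p}{2}$.
   Context: Sequences are finite, unordered, may contain repeated elements; a zero-sum subsequence is a subsequence (terms at distinct positions) whose terms sum to $0$. The multiplicity of an element is its number of occurrences. *)

(* Defs.v *)
From mathcomp Require Import all_boot all_algebra.
Set Implicit Arguments. Unset Strict Implicit. Unset Printing Implicit Defensive.
Import GRing.Theory.
Local Open Scope ring_scope.

Definition pt (p : nat) := ('F_p * 'F_p)%type.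

Definition padd p (x y : pt p) : pt p := (x.1 + y.1, x.2 + y.2).
Definition pscale p (t : 'F_p) (x : pt p) : pt p := (t * x.1, t * x.2).

Definition psum p (s : seq (pt p)) : pt p :=
  (\sum_(x <- s) x.1, \sum_(x <- s) x.2).

Definition has_zero_sum_subseq_of_length p (A : seq (pt p)) (n : nat) : Prop :=
  exists m : bitseq, size (mask m A) = n /\ psum (mask m A) = (0, 0).

Definition on_line p (a d : pt p) (x : pt p) : bool :=
  [exists t : 'F_p, x == padd a (pscale t d)].

(* Main.v *)
Require Import Defs.
From mathcomp Require Import all_boot all_algebra.
From mathcomp Require Import ring zify.
Set Implicit Arguments. Unset Strict Implicit. Unset Printing Implicit Defensive.
Import GRing.Theory.
Lemma big_shift (R : Type) (idx : R) (op : R -> R -> R) a n (F : nat -> R) :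
  \big[op/idx]_(a <= i < a + n) F i = \big[op/idx]_(0 <= i < n) F (i + a).
Proof. by rewrite -{1}[a]add0n big_addn addKn. Qed.

Lemma mask_big (R : Type) (idx : R) (op : Monoid.law idx) (T : Type) (x0 : T)
  (F : T -> R) m s : size m = size s ->
  \big[op/idx]_(x <- mask m s) F x =
  \big[op/idx]_(0 <= i < size s) (if nth false m i then F (nth x0 s i) else idx).
Proof.
elim: s m => [|x s IH] [|b m] //=.
  by move=> _; rewrite big_nil big_mkord big_ord0.
move=> [] hs; rewrite big_nat_recl //=.
case: b => /=; rewrite ?big_cons IH //.
by rewrite Monoid.mul1m.
Qed.

Definition keep (k : nat) (c : nat -> nat) (i : nat) : bool :=
  if (i < k)%N then c i != 0%N
  else if (i < k + k)%N then c (i - k)%N != 1%N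
  else if (i < k + k + k)%N then c (i - (k + k))%N != 2%N
  else i == (k + k + k).+1.

Lemma keep_hi k c i : ((k + k + k).+2 <= i)%N -> keep k c i = false.
Proof.
move=> h; rewrite /keep.
have -> : (i < k)%N = false by apply/negbTE; lia.
have -> : (i < k + k)%N = false by apply/negbTE; lia.
have -> : (i < k + k + k)%N = false by apply/negbTE; lia.
by apply/negbTE; lia.
Qed.

Lemma keep_3 k c : keep k c (k + k + k) = false.
Proof.
rewrite /keep.
have -> : (k + k + k < k)%N = false by apply/negbTE; lia.
have -> : (k + k + k < k + k)%N = false by apply/negbTE; lia.
have -> : (k + k + k < k + k + k)%N = false by apply/negbTE; lia.
by apply/negbTE; lia.
Qed.

Lemma keep_4 k c : keep k c (k + k + k).+1 = true.
Proof.
rewrite /keep.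
have -> : ((k + k + k).+1 < k)%N = false by apply/negbTE; lia.
have -> : ((k + k + k).+1 < k + k)%N = false by apply/negbTE; lia.
have -> : ((k + k + k).+1 < k + k + k)%N = false by apply/negbTE; lia.
by rewrite eqxx.
Qed.

Lemma keep_0 k c i : (i < k)%N -> keep k c i = (c i != 0%N).
Proof. by move=> h; rewrite /keep h. Qed.

Lemma keep_1 k c i : (i < k)%N -> keep k c (i + k) = (c i != 1%N).
Proof.
move=> h; rewrite /keep.
have -> : (i + k < k)%N = false by apply/negbTE; lia.
have -> : (i + k < k + k)%N = true by lia.
by rewrite addnK.
Qed.

Lemma keep_2 k c i : (i < k)%N -> keep k c (i + (k + k)) = (c i != 2%N).
Proof.
move=> h; rewrite /keep.
have -> : (i + (k + k) < k)%N = false by apply/negbTE; lia.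
have -> : (i + (k + k) < k + k)%N = false by apply/negbTE; lia.
have -> : (i + (k + k) < k + k + k)%N = true by lia.
by rewrite addnK.
Qed.

Lemma split_keep (R : Type) (idx : R) (op : Monoid.com_law idx) k c (G : nat -> R) N :
  ((k + k + k).+2 <= N)%N ->
  \big[op/idx]_(0 <= i < N) (if keep k c i then G i else idx) =
  op (\big[op/idx]_(j < k) op (if c j != 0%N then G j else idx)
        (op (if c j != 1%N then G (j + k)%N else idx)
            (if c j != 2%N then G (j + (k + k))%N else idx)))
     (G (k + k + k).+1).
Proof.
move=> hN.
have h1 : (0 <= k)%N by lia. have h2 : (k <= k + k)%N by lia.
have h3 : (k + k <= k + k + k)%N by lia. have h4 : (k + k + k <= (k + k + k).+1)%N by lia.
have h5 : ((k + k + k).+1 <= (k + k + k).+2)%N by lia.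
rewrite (@big_cat_nat _ _ _ k) //; last by lia.
rewrite (@big_cat_nat _ _ _ (k + k) k) //; last by lia.
rewrite (@big_cat_nat _ _ _ (k + k + k) (k + k)) //; last by lia.
rewrite (@big_cat_nat _ _ _ (k + k + k).+1 (k + k + k)) //; last by lia.
rewrite (@big_cat_nat _ _ _ (k + k + k).+2 (k + k + k).+1) //.
rewrite !big_nat1.
rewrite (big_shift _ _ k k) (big_shift _ _ (k + k) k).
rewrite (@big1_seq _ _ _ _ (index_iota (k + k + k).+2 N)); last first.
  move=> i /andP [_]; rewrite mem_index_iota => /andP [hi1 hi2].
  by rewrite keep_hi.
rewrite keep_3 keep_4 Monoid.mulm1 Monoid.mul1m.
rewrite (@eq_big_nat _ _ _ 0 k (fun i => if keep k c i then G i else idx) (fun j => if c j != 0%N then G j else idx)); last first.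
  by move=> i /andP [_ hi]; rewrite keep_0.
rewrite (@eq_big_nat _ _ _ 0 k (fun i => if keep k c (i + k) then G (i + k) else idx) (fun j => if c j != 1%N then G (j + k)%N else idx)); last first.
  by move=> i /andP [_ hi]; rewrite keep_1.
rewrite (@eq_big_nat _ _ _ 0 k (fun i => if keep k c (i + (k + k)) then G (i + (k + k)) else idx) (fun j => if c j != 2%N then G (j + (k + k))%N else idx)); last first.
  by move=> i /andP [_ hi]; rewrite keep_2.
rewrite !big_mkord !big_split /=.
by rewrite !Monoid.mulmA.
Qed.

Lemma mask_keep (R : Type) (idx : R) (op : Monoid.com_law idx) (T : Type) (x0 : T)
  (F : T -> R) k c (s : seq T) : ((k + k + k).+2 <= size s)%N ->
  \big[op/idx]_(x <- mask (mkseq (keep k c) (size s)) s) F x =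
  op (\big[op/idx]_(j < k) op (if c j != 0%N then F (nth x0 s j) else idx)
        (op (if c j != 1%N then F (nth x0 s (j + k)) else idx)
            (if c j != 2%N then F (nth x0 s (j + (k + k))) else idx)))
     (F (nth x0 s (k + k + k).+1)).
Proof.
move=> hs; rewrite (mask_big op x0) ?size_mkseq //.
rewrite (@eq_big_nat _ _ _ 0 (size s) _ (fun i => if keep k c i then F (nth x0 s i) else idx)).
  exact: (@split_keep _ _ op k c (fun i => F (nth x0 s i)) _ hs).
by move=> i /andP [_ hi]; rewrite nth_mkseq.
Qed.

Local Open Scope ring_scope.
Definition sumset p (A B : {set 'F_p}) : {set 'F_p} := [set x + y | x in A, y in B].

Lemma Fp_natval p (pr : prime p) (z : 'F_p) : z = (val z)%:R.
Proof.
apply: val_inj => /=; rewrite val_Fp_nat // modn_small //.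
have := ltn_ord z; by rewrite [X in (_ < X)%N -> _]Fp_cast.
Qed.

Lemma Fp_gen p (pr : prime p) (A : {set 'F_p}) (dl : 'F_p) :
  dl != 0 -> (forall x, x \in A -> x + dl \in A) -> A != set0 -> A = setT.
Proof.
move=> dl0 cl /set0Pn [a aA].
have H n : a + dl *+ n \in A.
  elim: n => [|n IH]; first by rewrite mulr0n addr0.
  by rewrite mulrSr addrA; apply: cl.
apply/setP => y; rewrite inE.
have -> : y = a + dl *+ (val ((y - a) / dl)).
  rewrite -mulr_natr -Fp_natval // mulrC divfK //. ring.
exact: H.
Qed.

Lemma CD p (pr : prime p) n : forall (A B : {set 'F_p}), (#|B| <= n)%N ->
  A != set0 -> B != set0 -> (minn p (#|A| + #|B| - 1) <= #|sumset A B|)%N.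
Proof.
elim: n => [|n IH] A B hB hA hB0.
  by move: hB0; rewrite -card_gt0; lia.
have base : forall b, b \in B -> (#|A| <= #|sumset A B|)%N.
  move=> b bB.
  have <- : #|[set x + b | x in A]| = #|A| by apply: card_imset; exact: addIr.
  apply: subset_leq_card; apply/subsetP => z /imsetP [x xA ->].
  by apply/imset2P; exists x b.
have [le1|gt1] := leqP #|B| 1.
  have := hB0; rewrite -card_gt0 => ?.
  case/set0Pn: hB0 => b bB; have := base b bB. lia.
have [full|nfull] := eqVneq (sumset A B) setT.
  by rewrite full cardsT card_Fp // geq_minl.
have [ex|nex] := boolP [exists a in A, exists b in B, exists b2 in B, b2 + (a - b) \notin A].
  case/exists_inP: ex => a aA /exists_inP [b bB] /exists_inP [b2 b2B nb2].
  set e := a - b.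
  set A' := A :|: [set y + e | y in B].
  set B' := [set y in B | y + e \in A].
  have bB' : b \in B' by rewrite inE bB /e addrC subrK.
  have b2B' : b2 \notin B' by rewrite inE b2B.
  have sB' : B' \subset B by apply/subsetP => y; rewrite inE => /andP[].
  have ltB : (#|B'| < #|B|)%N.
    apply: proper_card; apply/properP; split => //; by exists b2.
  have cBe : #|[set y + e | y in B]| = #|B| by apply: card_imset; exact: addIr.
  have cI : #|A :&: [set y + e | y in B]| = #|B'|.
    have -> : A :&: [set y + e | y in B] = [set y + e | y in B'].
      apply/setP => z; rewrite inE; apply/andP/imsetP.
        case=> zA /imsetP [y yB ezy]. exists y. by rewrite inE yB -ezy. exact: ezy.
      case=> y; rewrite inE => /andP [yB yeA] ->; split => //.
      by apply/imsetP; exists y.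
    by apply: card_imset; exact: addIr.
  have cU := cardsU A [set y + e | y in B].
  have cIA : (#|A :&: [set (y + e)%R | y in B]| <= #|A|)%N by apply: subset_leq_card; apply: subsetIl.
  have hA' : A' != set0.
    by apply/set0Pn; exists a; rewrite inE aA.
  have hB'0 : B' != set0 by apply/set0Pn; exists b.
  have IH' := IH A' B' (leq_trans (ltnSn _) (leq_trans ltB hB)) hA' hB'0.
  have sub : sumset A' B' \subset sumset A B.
    apply/subsetP => z /imset2P [x y xA' yB' ->].
    move: yB'; rewrite inE => /andP [yB yeA].
    move: xA'; rewrite inE => /orP [xA|/imsetP [u uB ->]].
      by apply/imset2P; exists x y.
    apply/imset2P; exists (y + e) u => //. by rewrite addrC -addrA (addrC e).
  have := subset_leq_card sub.
  rewrite -/A' in cU.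
  move: IH' cU cI cBe cIA ltB.
  move: #|A'| #|B'| #|A| #|B| #|sumset A' B'| #|sumset A B| #|A :&: _| #|[set (y + e)%R | y in B]|.
  move=> x1 x2 x3 x4 x5 x6 x7 x8 h1 h2 h3 h4 h5 h6 h7.
  clear -h1 h2 h3 h4 h5 h6 h7. subst. lia.
exfalso; move: nfull => /eqP; apply.
case/card_gt1P: gt1 => b1 [b2 [b1B b2B nb]].
have cl : forall x, x \in A -> x + (b2 - b1) \in A.
  move=> x xA; move/exists_inPn: nex => /(_ x xA) /exists_inPn /(_ b1 b1B) /exists_inPn /(_ b2 b2B).
  rewrite negbK; congr (_ \in A); ring.
have AT := Fp_gen pr _ cl hA; rewrite subr_eq0 eq_sym nb in AT.
have AT' := AT isT.
apply/setP => y; rewrite inE; apply/imset2P; exists (y - b1) b1 => //.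
  by rewrite AT' inE.
by rewrite subrK.
Qed.

Definition leF p (x y : 'F_p) : bool := (val x <= val y)%N.

Lemma sorted_distinct p (w : seq 'F_p) k i1 i2 : sorted (@leF p) w ->
  (forall x, count_mem x w <= k)%N -> (i1 + k <= i2)%N -> (i2 < size w)%N ->
  nth 0%R w i1 != nth 0%R w i2.
Proof.
move=> srt cnt hi hs; apply/eqP => E.
set x := nth 0%R w i1.
have tr : transitive (@leF p) by move=> a b d; rewrite /leF; apply: leq_trans.
have rf : reflexive (@leF p) by move=> a; rewrite /leF.
have allx : forall l, (i1 <= l <= i2)%N -> nth 0%R w l = x.
  move=> l /andP [h1 h2]; apply: val_inj; apply/eqP; rewrite eqn_leq.
  have := sorted_leq_nth tr rf 0%R srt; move=> H.
  have a1 := H i1 l; have a2 := H l i2.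
  rewrite /leF in a1 a2.
  rewrite a1 ?inE //; try lia.
  by rewrite /x E a2 ?inE //; lia.
have := cnt x.
rewrite -(cat_take_drop i1 w) count_cat.
rewrite -(cat_take_drop (i2 - i1).+1 (drop i1 w)) count_cat.
have : count_mem x (take (i2 - i1).+1 (drop i1 w)) = (i2 - i1).+1.
  have sz : size (take (i2 - i1).+1 (drop i1 w)) = (i2 - i1).+1.
    rewrite size_take size_drop; case: ifP => //; lia.
  rewrite -[RHS]sz; apply/eqP; rewrite -all_count; apply/(all_nthP 0%R) => l hl.
  rewrite sz in hl; rewrite nth_take // nth_drop /=; apply/eqP; apply: allx; lia.
move=> ->; lia.
Qed.

Definition Tset p (w : seq 'F_p) k j : {set 'F_p} :=
  nth 0%R w j |: (nth 0%R w (j + k) |: [set nth 0%R w (j + (k + k))]).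

Fixpoint SS p (w : seq 'F_p) k l : {set 'F_p} :=
  if l is l'.+1 then sumset (SS w k l') (Tset w k l') else [set 0%R].

Lemma Tset_card p (w : seq 'F_p) k j : sorted (@leF p) w ->
  (forall x, count_mem x w <= k)%N -> (j < k)%N -> ((k + k + k).+2 <= size w)%N ->
  (3 <= #|Tset w k j|)%N.
Proof.
move=> srt cnt hj hs.
have d1 := sorted_distinct srt cnt (i1 := j) (i2 := j + k) (leqnn _) ltac:(lia).
have d2 := sorted_distinct srt cnt (i1 := j + k) (i2 := j + (k + k)) ltac:(lia) ltac:(lia).
have d3 := sorted_distinct srt cnt (i1 := j) (i2 := j + (k + k)) ltac:(lia) ltac:(lia).
rewrite /Tset !cardsU1 cards1 !inE negb_or d1 d3 d2.
done.
Qed.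

Lemma SS_card p (pr : prime p) (w : seq 'F_p) k l : sorted (@leF p) w ->
  (forall x, count_mem x w <= k)%N -> (l <= k)%N -> ((k + k + k).+2 <= size w)%N ->
  (minn p (l + l).+1 <= #|SS w k l|)%N.
Proof.
move=> srt cnt; elim: l => [|l IH] hl hs.
  rewrite /= cards1; lia.
have IH' := IH ltac:(lia) hs.
have tc := Tset_card srt cnt (j := l) ltac:(lia) hs.
have ne1 : SS w k l != set0.
  rewrite -card_gt0; have := prime_gt1 pr; lia.
have ne2 : Tset w k l != set0 by rewrite -card_gt0; lia.
have := CD pr (leqnn _) ne1 ne2.
rewrite /=.
move: IH' tc; move: #|SS w k l| #|Tset w k l| #|sumset _ _| => *; lia.
Qed.

Lemma SS_mem p (w : seq 'F_p) k l x : x \in SS w k l ->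
  exists c : nat -> nat, (forall j, c j < 3)%N /\
    x = \sum_(j < l) nth 0%R w (j + c j * k).
Proof.
elim: l x => [|l IH] x /=.
  rewrite inE => /eqP ->; exists (fun _ => 0%N); split => //.
  by rewrite big_ord0.
case/imset2P => y z /IH [c [hc ->]] zT ->.
have [c0 [hc0 ez]] : exists c0, (c0 < 3)%N /\ z = nth 0%R w (l + c0 * k).
  move: zT; rewrite !inE => /orP [/eqP ->|/orP [/eqP ->|/eqP ->]].
  - by exists 0%N; rewrite mul0n addn0.
  - by exists 1%N; rewrite mul1n.
  - by exists 2%N; rewrite mul2n -addnn.
exists (fun j => if j == l then c0 else c j); split.
  by move=> j; case: ifP.
rewrite big_ord_recr /= eqxx ez; congr (_ + _)%R.
apply: eq_bigr => i _; rewrite ifF //.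
by apply/negbTE; rewrite neq_ltn ltn_ord.
Qed.

Lemma core p k (pr : prime p) (hp : p = (k + k).+1) (w : seq 'F_p) :
  sorted (@leF p) w -> ((k + k + k).+2 <= size w)%N ->
  (forall x, count_mem x w <= k)%N ->
  exists mm : bitseq, size (mask mm w) = p /\ \sum_(x <- mask mm w) x = 0.
Proof.
move=> srt hs cnt.
set tgt := \sum_(j < k) (w`_j + w`_(j + k) + w`_(j + (k + k))) + w`_((k + k + k).+1).
have hSS := SS_card pr srt cnt (leqnn k) hs.
have full : SS w k k = setT.
  apply/eqP; rewrite eqEcard subsetT cardsT card_Fp //.
  by move: hSS; rewrite -hp minnn.
have : tgt \in SS w k k by rewrite full inE.
case/SS_mem => c [hc etgt].
exists (mkseq (keep k c) (size w)); split.
  rewrite -sum1_size (mask_keep _ 0%R) //.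
  rewrite (eq_bigr (fun _ => 2%N)); last first.
    by move=> j _; case: (c j) (hc j) => [|[|[|]]].
  rewrite sum_nat_const card_ord hp; change ((k * 2) + 1 = (k + k).+1)%N; lia.
rewrite (mask_keep _ 0%R) //.
have -> : \sum_(j < k) ((if c j != 0%N then w`_j else 0) +
      ((if c j != 1%N then w`_(j + k) else 0) +
       (if c j != 2%N then w`_(j + (k + k)) else 0))) =
   \sum_(j < k) (w`_j + w`_(j + k) + w`_(j + (k + k))) - \sum_(j < k) w`_(j + c j * k).
  rewrite -sumrB; apply: eq_bigr => j _.
  case: (c j) (hc j) => [|[|[|]]] // _ /=.
  - rewrite mul0n addn0; ring.
  - rewrite mul1n; ring.
  - rewrite mul2n -addnn; ring.
rewrite -etgt /tgt. set S1 := (\sum_(j < k) _ : 'F_p). set W := w`_(k + k + k).+1. change (S1 - (S1 + W) + W = 0). ring.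
Qed.

Lemma sum_const_seq p (T : Type) (s : seq T) (c : 'F_p) : \sum_(x <- s) c = c *+ size s.
Proof. elim: s => [|x s IH]; first by rewrite big_nil. by rewrite big_cons IH mulrS. Qed.

Theorem corollary2p4 (p : nat) (A : seq ('F_p * 'F_p)) :
  prime p ->
  size A = (4 * p - 4)%N ->
  ~ has_zero_sum_subseq_of_length A p ->
  (forall x, (2 * count_mem x A < p)%N) ->
  forall a d : 'F_p * 'F_p, d != (0, 0)%R ->
    (2 * count (on_line a d) A < 3 * p)%N.
Proof.
move=> pr hsz nz hmul a d hd.
rewrite ltnNge; apply/negP => hge.
case: (even_prime pr) => [p2|podd].
  case: A hsz hmul {nz hge} => [|x A'] /= hsz hmul; first by lia.
  by have := hmul x; rewrite /= eqxx; lia.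
set k := p./2.
have hp : p = (k + k).+1.
  by rewrite -[LHS](odd_double_half p) podd addnn.
clearbody k.
have hcnt : ((k + k + k).+1 < count (on_line a d) A)%N by lia.
set f := fun x : 'F_p * 'F_p => if d.1 != 0 then (x.1 - a.1) / d.1 else (x.2 - a.2) / d.2.
have fpar : forall t, f (padd a (pscale t d)) = t.
  move=> t; rewrite /f /padd /pscale /=.
  case: ifP => [d1|/negbFE/eqP d1].
    by rewrite (addrC a.1) addrK mulfK.
  have d2 : d.2 != 0.
    apply: contra hd => /eqP d2; apply/eqP.
    by rewrite [LHS]surjective_pairing d1 d2.
  by rewrite (addrC a.2) addrK mulfK.
have online : forall x, on_line a d x -> x = padd a (pscale (f x) d).
  by move=> x /existsP [t /eqP ->]; rewrite fpar.
set s' := filter (on_line a d) A.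
set T := map f s'.
set w := sort (@leF p) T.
have pw : perm_eq w T by rewrite perm_sort.
have hsw : ((k + k + k).+2 <= size w)%N.
  rewrite (perm_size pw) size_map size_filter; exact: hcnt.
have cntT : forall t, (count_mem t T <= k)%N.
  move=> t; rewrite count_map count_filter.
  have := hmul (padd a (pscale t d)).
  have : (count (predI (preim f (pred1 t)) (on_line a d)) A <=
          count_mem (padd a (pscale t d)) A)%N.
    apply: sub_count => y /andP [/= /eqP fy ony].
    by rewrite /= {1}(online y ony) fy.
  move=> h1 h2; apply: (leq_trans h1); move: h2; move: (count_mem _ _) => n h2; lia.
have cntw : forall t, (count_mem t w <= k)%N.
  by move=> t; rewrite (permP pw).
have srt : sorted (@leF p) w.
  by apply: sort_sorted => x y; rewrite /leF leq_total.
have [mm [szu sumu]] := core pr hp srt hsw cntw.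
set u := mask mm w in szu sumu.
have cu : forall x, (count_mem x u <= count_mem x T)%N.
  move=> x; rewrite -(permP pw).
  have : exists2 s, subseq s w & perm_eq u s by exists u; rewrite ?mask_subseq.
  by move/count_subseqP.
have [u' su' pu'] := iffLR (count_subseqP _ _) cu.
case/subseqP: su' => m' hm' eu'.
rewrite /T -map_mask in eu'.
set w' := mask m' s' in eu'.
have sw' : subseq w' A.
  exact: subseq_trans (mask_subseq m' s') (filter_subseq _ A).
case/subseqP: sw' => m'' _ ew'.
apply: nz; exists m''; rewrite -ew'.
have szw' : size w' = p.
  by rewrite -(size_map f) -eu' -(perm_size pu') szu.
split => //.
have onw : forall x, x \in w' -> on_line a d x.
  by move=> x /mem_mask; rewrite mem_filter => /andP [].
have sf : \sum_(x <- w') f x = 0.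
  by rewrite -(big_map f xpredT id) -eu' -(perm_big _ pu') sumu.
have p0 : (p%:R : 'F_p) = 0 by apply: pchar_Fp_0.
rewrite /psum; congr (_, _).
  rewrite (eq_big_seq (fun x => a.1 + f x * d.1)); last first.
    by move=> x /onw /online {1}->.
  by rewrite big_split /= sum_const_seq -mulr_suml sf mul0r addr0 szw' -mulr_natr p0 mulr0.
rewrite (eq_big_seq (fun x => a.2 + f x * d.2)); last first.
  by move=> x /onw /online {1}->.
by rewrite big_split /= sum_const_seq -mulr_suml sf mul0r addr0 szw' -mulr_natr p0 mulr0.
Qed.
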